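(* Let $H$ be a finite-dimensional Hopf algebra over $\mathbb{C}$ and $V$ a finite-dimensional left $H$-module. For $\omega\in\mathbb{C}$ with $|\omega|=1$ put $\mathrm{LKer}^{\omega}_V=\{h\in H\mid \sum h_1\otimes h_2\cdot v=\omega\, h\otimes v\ \ \forall v\in V\}$, and $\mathrm{LKer}_V=\mathrm{LKer}^1_V$. Then: (i) if $\mathrm{LKer}^{\omega}_V\neq0$, it is a left coideal of $H$ stable under the left adjoint action $h\cdot a=\sum h_1aS(h_2)$; (ii) $\mathrm{LKer}^{\omega}_V\,\mathrm{LKer}^{\omega'}_V\subset\mathrm{LKer}^{\omega\omega'}_V$; (iii) if $\omega^l=1$ then $\mathrm{LKer}^{\omega}_V\subset\mathrm{LKer}_{V^{\otimes l}}$ (with $H$ acting diagonally on $V^{\otimes l}$); (iv) $\bigoplus_{\omega}\mathrm{LKer}^{\omega}_V$ (sum over all $\omega$ with $|\omega|=1$) is a normal left coideal subalgebra of $H$.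
   Context: A left coideal subalgebra of $H$ is called normal if it is stable under the left adjoint action of $H$ on itself, $h\cdot a=\sum h_1aS(h_2)$, where $S$ is the antipode. *)

(* Defs.v *)
From HB Require Import structures.
From mathcomp Require Import all_boot all_order all_algebra.
From mathcomp Require Import mxtens.
Set Implicit Arguments.
Unset Strict Implicit.
Unset Printing Implicit Defensive.
Import Order.TTheory GRing.Theory Num.Theory.
Local Open Scope ring_scope.

(* A finite-dimensional algebra-coalgebra-with-antipode H of dimension n over
   the field C, given by structure constants in a basis (b_i)_{i<n}:
     b_i b_j = \sum_k hm i j k b_k,        1 = \sum_k hu k b_k,
     Delta b_k = \sum_{i,j} hc k i j b_i (x) b_j,   eps b_k = he k,
     S b_i = \sum_p hs i p b_p.
   Elements of H are coordinate row vectors 'rV[C]_n. *)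
Record hopf_data (C : fieldType) (n : nat) := HopfData {
  hm : 'I_n -> 'I_n -> 'I_n -> C;
  hu : 'I_n -> C;
  hc : 'I_n -> 'I_n -> 'I_n -> C;
  he : 'I_n -> C;
  hs : 'I_n -> 'I_n -> C }.

Section Hopf.
Variables (C : fieldType) (n : nat) (H : hopf_data C n).

Definition is_hopf : Prop :=
  (forall i j k q, \sum_p hm H i j p * hm H p k q = \sum_p hm H j k p * hm H i p q) /\
  (forall j k, \sum_i hu H i * hm H i j k = (j == k)%:R) /\
  (forall j k, \sum_i hu H i * hm H j i k = (j == k)%:R) /\
  (forall k i j l, \sum_p hc H k p l * hc H p i j = \sum_p hc H k i p * hc H p j l) /\
  (forall k j, \sum_i he H i * hc H k i j = (k == j)%:R) /\
  (forall k i, \sum_j he H j * hc H k i j = (k == i)%:R) /\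
  (* Delta is an algebra map *)
  (forall i j a b, \sum_p hm H i j p * hc H p a b =
     \sum_a1 \sum_b1 \sum_a2 \sum_b2
        hc H i a1 b1 * hc H j a2 b2 * hm H a1 a2 a * hm H b1 b2 b) /\
  (forall a b, \sum_k hu H k * hc H k a b = hu H a * hu H b) /\
  (forall i j, \sum_p hm H i j p * he H p = he H i * he H j) /\
  (\sum_k hu H k * he H k = 1) /\
  (* antipode *)
  (forall k q, \sum_i \sum_j \sum_p hc H k i j * hs H i p * hm H p j q = he H k * hu H q) /\
  (forall k q, \sum_i \sum_j \sum_p hc H k i j * hs H j p * hm H i p q = he H k * hu H q).

Definition hb (i : 'I_n) : 'rV[C]_n := delta_mx 0 i.
Definition hmul (x y : 'rV[C]_n) : 'rV[C]_n :=
  \row_k \sum_i \sum_j x 0 i * y 0 j * hm H i j k.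
Definition hunit : 'rV[C]_n := \row_k hu H k.
Definition hS (x : 'rV[C]_n) : 'rV[C]_n := \row_p \sum_i x 0 i * hs H i p.
(* Elements of H (x) H are n x n matrices in the basis b_i (x) b_j;
   the simple tensor x (x) y is x^T *m y. *)
Definition comul (x : 'rV[C]_n) : 'M[C]_(n, n) :=
  \matrix_(i, j) \sum_k x 0 k * hc H k i j.

Definition in_HtensL (L : 'rV[C]_n -> Prop) (M : 'M[C]_(n, n)) : Prop :=
  exists s : seq ('rV[C]_n * 'rV[C]_n),
    (forall p, p \in s -> L p.2) /\ M = \sum_(p <- s) (p.1^T *m p.2).

Definition is_subspace (L : 'rV[C]_n -> Prop) : Prop :=
  L 0 /\ forall (a : C) x y, L x -> L y -> L (a *: x + y).

Definition is_left_coideal (L : 'rV[C]_n -> Prop) : Prop :=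
  is_subspace L /\ forall x, L x -> in_HtensL L (comul x).

Definition is_subalgebra (L : 'rV[C]_n -> Prop) : Prop :=
  is_subspace L /\ L hunit /\ forall x y, L x -> L y -> L (hmul x y).

Definition hadj (h a : 'rV[C]_n) : 'rV[C]_n :=
  \sum_i \sum_j comul h i j *: hmul (hmul (hb i) a) (hS (hb j)).

Definition ad_stable (L : 'rV[C]_n -> Prop) : Prop :=
  forall h a, L a -> L (hadj h a).

(* Left H-modules of dimension d: b_i acts on column vectors by rho i. *)
Definition is_hmod (d : nat) (rho : 'I_n -> 'M[C]_d) : Prop :=
  \sum_k hu H k *: rho k = 1%:M /\
  forall i j, rho i *m rho j = \sum_k hm H i j k *: rho k.

Definition hact (d : nat) (rho : 'I_n -> 'M[C]_d) (x : 'rV[C]_n) (v : 'cV[C]_d)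
  : 'cV[C]_d := \sum_k x 0 k *: (rho k *m v).

(* Elements of H (x) V are n x d matrices; x (x) v is x^T *m v^T. *)
Definition tensHV (d : nat) (x : 'rV[C]_n) (v : 'cV[C]_d) : 'M[C]_(n, d) :=
  x^T *m v^T.

Definition coact (d : nat) (rho : 'I_n -> 'M[C]_d) (h : 'rV[C]_n) (v : 'cV[C]_d)
  : 'M[C]_(n, d) :=
  \sum_i \sum_j comul h i j *: tensHV (hb i) (hact rho (hb j) v).

Definition LKer (d : nat) (rho : 'I_n -> 'M[C]_d) (w : C) (h : 'rV[C]_n) : Prop :=
  forall v : 'cV[C]_d, coact rho h v = w *: tensHV h v.

Definition tens_rep (d e : nat) (rho : 'I_n -> 'M[C]_d) (sig : 'I_n -> 'M[C]_e)
  : 'I_n -> 'M[C]_(d * e) :=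
  fun k => \sum_i \sum_j hc H k i j *: tensmx (rho i) (sig j).

(* V^{(x) l}: V^{(x) 0} is the trivial module C (action by eps),
   V^{(x) (l+1)} = V (x) V^{(x) l}. *)
Fixpoint tpow (d : nat) (rho : 'I_n -> 'M[C]_d) (l : nat)
  : {m : nat & 'I_n -> 'M[C]_m} :=
  match l with
  | 0 => existT _ 1%N (fun k => (he H k)%:M)
  | l'.+1 => existT _ (d * projT1 (tpow rho l'))%N
                    (tens_rep rho (projT2 (tpow rho l')))
  end.

End Hopf.

Section Sum.
Variables (C : numClosedFieldType) (n : nat) (H : hopf_data C n).

Definition LKer_sum (d : nat) (rho : 'I_n -> 'M[C]_d) (h : 'rV[C]_n) : Prop :=
  exists s : seq (C * 'rV[C]_n),
    (forall p, p \in s -> `|p.1| = 1 /\ LKer H rho p.1 p.2) /\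
    h = \sum_(p <- s) p.2.

Definition LKer_direct (d : nat) (rho : 'I_n -> 'M[C]_d) : Prop :=
  forall s : seq (C * 'rV[C]_n), uniq (map fst s) ->
    (forall p, p \in s -> `|p.1| = 1 /\ LKer H rho p.1 p.2) ->
    \sum_(p <- s) p.2 = 0 -> forall p, p \in s -> p.2 = 0.
End Sum.

(* Main.v *)
Require Import Defs.
From HB Require Import structures.
From mathcomp Require Import all_boot all_order all_algebra.
From mathcomp Require Import mxtens ring.
Set Implicit Arguments.
Unset Strict Implicit.
Unset Printing Implicit Defensive.
Import Order.TTheory GRing.Theory Num.Theory.
Local Open Scope ring_scope.

Section Main.
Variables (C : numClosedFieldType) (n : nat) (H : hopf_data C n).
Local Notation hb := (hb C).

Definition R d (rho : 'I_n -> 'M[C]_d) (x : 'rV[C]_n) : 'M[C]_d := \sum_k x 0 k *: rho k.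
Definition Dl (i : 'I_n) (x : 'rV[C]_n) : 'rV[C]_n := row i (comul H x).
Definition K d (rho : 'I_n -> 'M[C]_d) (w : C) (h : 'rV[C]_n) : Prop :=
  forall i, R rho (Dl i h) = (w * h 0 i)%:M.

Lemma hbE (i : 'I_n) z k : hb i z k = (k == i)%:R.
Proof. by rewrite /hb mxE ord1 eqxx. Qed.

Lemma hactE d (rho : 'I_n -> 'M[C]_d) j v : hact rho (hb j) v = rho j *m v.
Proof.
rewrite /hact (bigD1 j) //= big1 => [|k kj]; first by rewrite hbE eqxx scale1r addr0.
by rewrite hbE (negbTE kj) scale0r.
Qed.

Lemma tensHVE d (x : 'rV[C]_n) (v : 'cV[C]_d) a c : tensHV x v a c = x 0 a * v c 0.
Proof. by rewrite /tensHV !mxE big_ord1 !mxE. Qed.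

Lemma coactE d (rho : 'I_n -> 'M[C]_d) h v :
  coact H rho h v = \matrix_(a, c) (R rho (Dl a h) *m v) c 0.
Proof.
apply/matrixP => a c; rewrite /coact mxE summxE (bigD1 a) //=.
rewrite [X in _ + X]big1 => [|i ia].
  rewrite addr0 summxE /R mulmx_suml summxE; apply: eq_bigr => j _.
  rewrite mxE tensHVE hbE eqxx mul1r hactE -scalemxAl mxE /Dl mxE.
  by rewrite !mxE.
rewrite summxE big1 // => j _; rewrite mxE tensHVE hbE.
by rewrite eq_sym (negbTE ia) mul0r mulr0.
Qed.

Lemma LKerK d (rho : 'I_n -> 'M[C]_d) w h : LKer H rho w h <-> K rho w h.
Proof.
split => [hk i|hk v].
  apply/matrixP => c j; move: (hk (delta_mx j 0)) => /matrixP/(_ i c).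
  rewrite coactE mxE [(w *: tensHV _ _) _ _]mxE tensHVE mxE (bigD1 j) //= big1 => [|k kj].
    rewrite [delta_mx j 0 j 0]mxE !eqxx mulr1 addr0 => ->; rewrite !mxE eq_sym.
    by case: eqP; rewrite ?mulr1 ?mulr0.
  by rewrite mxE (negbTE kj) mulr0.
apply/matrixP => a c; rewrite coactE mxE hk mul_scalar_mx mxE [(w *: tensHV _ _) _ _]mxE tensHVE.
by rewrite mulrA.
Qed.

Lemma DlE i x j : Dl i x 0 j = \sum_k x 0 k * hc H k i j.
Proof. by rewrite /Dl /comul !mxE. Qed.

Lemma Dl_lin i : linear (Dl i).
Proof.
move=> a x y; apply/matrixP => z j; rewrite ord1 DlE [RHS]mxE [(a *: Dl i x) _ _]mxE !DlE.
rewrite mulr_sumr -big_split.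
by apply: eq_bigr => k _; rewrite !mxE mulrDl mulrA.
Qed.
HB.instance Definition _ i := GRing.isLinear.Build C _ _ _ (Dl i) (Dl_lin i).

Lemma R_lin d (rho : 'I_n -> 'M[C]_d) : linear (R rho).
Proof.
move=> a x y; rewrite /R scaler_sumr -big_split; apply: eq_bigr => k _.
by rewrite !mxE scalerDl scalerA.
Qed.
HB.instance Definition _ d rho := GRing.isLinear.Build C _ _ _ (@R d rho) (R_lin rho).

Lemma DlZ i a x : Dl i (a *: x) = a *: Dl i x. Proof. exact: linearZ. Qed.
Lemma DlD i x y : Dl i (x + y) = Dl i x + Dl i y. Proof. exact: linearD. Qed.
Lemma Dl0 i : Dl i 0 = 0. Proof. exact: linear0. Qed.
Lemma Dl_sum i I (r : seq I) (P : pred I) F :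
  Dl i (\sum_(j <- r | P j) F j) = \sum_(j <- r | P j) Dl i (F j).
Proof. exact: linear_sum. Qed.
Lemma RZ d (rho : 'I_n -> 'M[C]_d) a x : R rho (a *: x) = a *: R rho x. Proof. exact: linearZ. Qed.
Lemma RD d (rho : 'I_n -> 'M[C]_d) x y : R rho (x + y) = R rho x + R rho y. Proof. exact: linearD. Qed.
Lemma R0 d (rho : 'I_n -> 'M[C]_d) : R rho 0 = 0. Proof. exact: linear0. Qed.
Lemma R_sum d (rho : 'I_n -> 'M[C]_d) I (r : seq I) (P : pred I) F :
  R rho (\sum_(j <- r | P j) F j) = \sum_(j <- r | P j) R rho (F j).
Proof. exact: linear_sum. Qed.

Lemma R_hb d (rho : 'I_n -> 'M[C]_d) k : R rho (hb k) = rho k.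
Proof.
rewrite /R (bigD1 k) //= big1 => [|i ik]; first by rewrite hbE eqxx scale1r addr0.
by rewrite hbE (negbTE ik) scale0r.
Qed.

Lemma row_decomp (x : 'rV[C]_n) : x = \sum_k x 0 k *: hb k.
Proof.
apply/matrixP => z j; rewrite ord1 summxE (bigD1 j) //= big1 => [|k kj].
  by rewrite mxE hbE eqxx mulr1 addr0.
by rewrite mxE hbE eq_sym (negbTE kj) mulr0.
Qed.

Lemma hmulE x y k : hmul H x y 0 k = \sum_i \sum_j x 0 i * y 0 j * hm H i j k.
Proof. by rewrite mxE. Qed.

Lemma sum_deltaL (F : 'I_n -> C) i : \sum_k F k * (k == i)%:R = F i.
Proof.
rewrite (bigD1 i) //= big1 => [|k ki]; first by rewrite eqxx mulr1 addr0.
by rewrite (negbTE ki) mulr0.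
Qed.
Lemma sum_deltaR (F : 'I_n -> C) i : \sum_k F k * (i == k)%:R = F i.
Proof. by under eq_bigr do rewrite eq_sym; rewrite sum_deltaL. Qed.
Lemma sum_deltaL' (F : 'I_n -> C) i : \sum_k (k == i)%:R * F k = F i.
Proof. by under eq_bigr do rewrite mulrC; rewrite sum_deltaL. Qed.
Lemma sum_deltaR' (F : 'I_n -> C) i : \sum_k (i == k)%:R * F k = F i.
Proof. by under eq_bigr do rewrite mulrC; rewrite sum_deltaR. Qed.

Lemma hmulDl x1 x2 y : hmul H (x1 + x2) y = hmul H x1 y + hmul H x2 y.
Proof.
apply/matrixP => z k; rewrite ord1 [RHS]mxE !hmulE -big_split; apply: eq_bigr => i _.
by rewrite -big_split; apply: eq_bigr => j _; rewrite mxE !mulrDl.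
Qed.
Lemma hmulDr x y1 y2 : hmul H x (y1 + y2) = hmul H x y1 + hmul H x y2.
Proof.
apply/matrixP => z k; rewrite ord1 [RHS]mxE !hmulE -big_split; apply: eq_bigr => i _.
by rewrite -big_split; apply: eq_bigr => j _; rewrite mxE mulrDr !mulrDl.
Qed.
Lemma hmulZl a x y : hmul H (a *: x) y = a *: hmul H x y.
Proof.
apply/matrixP => z k; rewrite ord1 [RHS]mxE !hmulE mulr_sumr; apply: eq_bigr => i _.
by rewrite mulr_sumr; apply: eq_bigr => j _; rewrite mxE !mulrA.
Qed.
Lemma hmulZr a x y : hmul H x (a *: y) = a *: hmul H x y.
Proof.
apply/matrixP => z k; rewrite ord1 [RHS]mxE !hmulE mulr_sumr; apply: eq_bigr => i _.
by rewrite mulr_sumr; apply: eq_bigr => j _; rewrite mxE mulrCA !mulrA.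
Qed.
Lemma hmul0l y : hmul H 0 y = 0.
Proof. by rewrite -(scale0r (0 : 'rV[C]_n)) hmulZl !scale0r. Qed.
Lemma hmul0r x : hmul H x 0 = 0.
Proof. by rewrite -(scale0r (0 : 'rV[C]_n)) hmulZr !scale0r. Qed.
Lemma hmul_suml I (r : seq I) (P : pred I) F y :
  hmul H (\sum_(i <- r | P i) F i) y = \sum_(i <- r | P i) hmul H (F i) y.
Proof. exact: (big_morph (fun x => hmul H x y) (fun a b => hmulDl a b y) (hmul0l y)). Qed.
Lemma hmul_sumr I (r : seq I) (P : pred I) F x :
  hmul H x (\sum_(i <- r | P i) F i) = \sum_(i <- r | P i) hmul H x (F i).
Proof. exact: (big_morph (hmul H x) (hmulDr x) (hmul0r x)). Qed.

Lemma hmul_hb i j : hmul H (hb i) (hb j) = \row_k hm H i j k.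
Proof.
apply/matrixP => z k; rewrite ord1 hmulE mxE.
under eq_bigr do under eq_bigr do rewrite !hbE.
rewrite (bigD1 i) //= [X in _ + X]big1 => [|i1 i1i]; last first.
  by apply: big1 => j1 _; rewrite (negbTE i1i) !mul0r.
rewrite addr0 (bigD1 j) //= big1 => [|j1 j1j]; last by rewrite (negbTE j1j) mulr0 mul0r.
by rewrite !eqxx !mul1r addr0.
Qed.

Hypothesis hH : is_hopf H.

Lemma mA i j k q : \sum_p hm H i j p * hm H p k q = \sum_p hm H j k p * hm H i p q.
Proof. by case: hH. Qed.
Lemma uL j k : \sum_i hu H i * hm H i j k = (j == k)%:R.
Proof. by case: hH => _ [h _]. Qed.
Lemma uR j k : \sum_i hu H i * hm H j i k = (j == k)%:R.
Proof. by case: hH => _ [_ [h _]]. Qed.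
Lemma cA k i j l : \sum_p hc H k p l * hc H p i j = \sum_p hc H k i p * hc H p j l.
Proof. by case: hH => _ [_ [_ [h _]]]. Qed.
Lemma eL k j : \sum_i he H i * hc H k i j = (k == j)%:R.
Proof. by case: hH => _ [_ [_ [_ [h _]]]]. Qed.
Lemma eR k i : \sum_j he H j * hc H k i j = (k == i)%:R.
Proof. by case: hH => _ [_ [_ [_ [_ [h _]]]]]. Qed.
Lemma cM i j a b : \sum_p hm H i j p * hc H p a b =
     \sum_a1 \sum_b1 \sum_a2 \sum_b2
        hc H i a1 b1 * hc H j a2 b2 * hm H a1 a2 a * hm H b1 b2 b.
Proof. by case: hH => _ [_ [_ [_ [_ [_ [h _]]]]]]. Qed.
Lemma cU a b : \sum_k hu H k * hc H k a b = hu H a * hu H b.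
Proof. by case: hH => _ [_ [_ [_ [_ [_ [_ [h _]]]]]]]. Qed.
Lemma sL k q : \sum_i \sum_j \sum_p hc H k i j * hs H i p * hm H p j q = he H k * hu H q.
Proof. by case: hH => _ [_ [_ [_ [_ [_ [_ [_ [_ [_ [h _]]]]]]]]]]. Qed.
Lemma sR k q : \sum_i \sum_j \sum_p hc H k i j * hs H j p * hm H i p q = he H k * hu H q.
Proof. by case: hH => _ [_ [_ [_ [_ [_ [_ [_ [_ [_ [_ h]]]]]]]]]]. Qed.

Lemma counit_Dl i x : \sum_j Dl i x 0 j * he H j = x 0 i.
Proof.
under eq_bigr do rewrite DlE mulr_suml.
rewrite exchange_big /=.
under eq_bigr => k _ do [under eq_bigr do rewrite -mulrA; rewrite -mulr_sumr].
under eq_bigr => k _ do [under eq_bigr do rewrite mulrC; rewrite eR].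
by rewrite sum_deltaL.
Qed.

Lemma coassoc_Dl i i' x : Dl i' (Dl i x) = \sum_p hc H p i i' *: Dl p x.
Proof.
apply/matrixP => z j; rewrite ord1 summxE DlE.
under eq_bigr do rewrite DlE mulr_suml.
rewrite exchange_big /=.
under eq_bigr => k _ do [under eq_bigr do rewrite -mulrA; rewrite -mulr_sumr].
under [RHS]eq_bigr do rewrite mxE DlE mulr_sumr.
rewrite exchange_big /=; apply: eq_bigr => m _.
under [RHS]eq_bigr do rewrite mulrCA.
rewrite -mulr_sumr; congr (_ * _).
under [RHS]eq_bigr do rewrite mulrC.
by rewrite cA.
Qed.

Lemma Dl_hb a k : Dl a (hb k) = \row_b hc H k a b.
Proof.
apply/matrixP => z b; rewrite ord1 DlE mxE.
by under eq_bigr do rewrite hbE; rewrite sum_deltaL'.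
Qed.

Lemma Dl_mul_hb i i1 j1 : Dl i (hmul H (hb i1) (hb j1)) =
  \sum_a1 \sum_a2 hm H a1 a2 i *: hmul H (Dl a1 (hb i1)) (Dl a2 (hb j1)).
Proof.
apply/matrixP => z b; rewrite ord1 DlE hmul_hb.
under eq_bigr do rewrite mxE.
rewrite cM summxE; apply: eq_bigr => a1 _.
rewrite summxE.
under [RHS]eq_bigr do rewrite mxE hmulE !Dl_hb mulr_sumr.
rewrite [RHS]exchange_big /=; apply: eq_bigr => b1 _.
apply: eq_bigr => a2 _; rewrite mulr_sumr; apply: eq_bigr => b2 _.
by rewrite !mxE; ring.
Qed.

Lemma scaler_sum2 (V : lmodType C) (c : 'I_n -> 'I_n -> C) (M : 'I_n -> 'I_n -> V) a :
  a *: (\sum_k \sum_l c k l *: M k l) = \sum_k \sum_l (a * c k l) *: M k l.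
Proof.
rewrite scaler_sumr; apply: eq_bigr => k _.
by rewrite scaler_sumr; apply: eq_bigr => l _; rewrite scalerA.
Qed.

Lemma swap4 (V : lmodType C) (c e : 'I_n -> 'I_n -> C) (M : 'I_n -> 'I_n -> 'I_n -> 'I_n -> V) :
  \sum_a \sum_b c a b *: (\sum_k \sum_l e k l *: M a b k l) =
  \sum_k \sum_l e k l *: (\sum_a \sum_b c a b *: M a b k l).
Proof.
under eq_bigr do under eq_bigr do rewrite scaler_sum2.
under [RHS]eq_bigr do under eq_bigr do rewrite scaler_sum2.
under eq_bigr do rewrite exchange_big /=.
under eq_bigr do under eq_bigr do rewrite exchange_big /=.
rewrite exchange_big /=.
under eq_bigr do rewrite exchange_big /=.
apply: eq_bigr => k _; apply: eq_bigr => l _; apply: eq_bigr => a _; apply: eq_bigr => b _.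
by rewrite mulrC.
Qed.

Lemma hmul_bilin (x y : 'rV[C]_n) u v :
  hmul H (\sum_k x 0 k *: u k) (\sum_l y 0 l *: v l) =
  \sum_k \sum_l (x 0 k * y 0 l) *: hmul H (u k) (v l).
Proof.
rewrite hmul_suml; apply: eq_bigr => k _.
rewrite hmulZl hmul_sumr scaler_sumr; apply: eq_bigr => l _.
by rewrite hmulZr scalerA.
Qed.

Lemma Dl_mul i x y : Dl i (hmul H x y) =
  \sum_a1 \sum_a2 hm H a1 a2 i *: hmul H (Dl a1 x) (Dl a2 y).
Proof.
rewrite [in LHS](row_decomp x) [in LHS](row_decomp y) hmul_bilin Dl_sum.
under eq_bigr do rewrite Dl_sum.
under eq_bigr do under eq_bigr do rewrite DlZ.
under eq_bigr => a _ do under eq_bigr => b _ do rewrite (Dl_mul_hb i a b).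
rewrite [in RHS](row_decomp x) [in RHS](row_decomp y).
under [RHS]eq_bigr => a1 _ do under eq_bigr => a2 _ do
  rewrite (Dl_sum a1) (Dl_sum a2).
under [RHS]eq_bigr => a1 _ do under eq_bigr => a2 _ do
  (under eq_bigr => k _ do rewrite (DlZ a1); under [X in hmul _ _ X]eq_bigr => k _ do rewrite (DlZ a2); rewrite hmul_bilin).
by rewrite swap4.
Qed.

Lemma hS_hb i a : hS H (hb i) 0 a = hs H i a.
Proof. rewrite mxE; under eq_bigr do rewrite hbE; exact: sum_deltaL'. Qed.

Lemma hmul_r_hb x j q : hmul H x (hb j) 0 q = \sum_a x 0 a * hm H a j q.
Proof.
rewrite hmulE; apply: eq_bigr => a _.
rewrite (bigD1 j) //= big1 => [|b bj]; first by rewrite hbE eqxx mulr1 addr0.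
by rewrite hbE (negbTE bj) mulr0 mul0r.
Qed.

Lemma hmul_l_hb i y q : hmul H (hb i) y 0 q = \sum_b y 0 b * hm H i b q.
Proof.
rewrite hmulE exchange_big /=; apply: eq_bigr => b _.
rewrite (bigD1 i) //= big1 => [|a ai]; last by rewrite hbE (negbTE ai) !mul0r.
by rewrite hbE eqxx mul1r addr0.
Qed.

Lemma antiA_h k : \sum_i \sum_j hc H k i j *: hmul H (hS H (hb i)) (hb j) = he H k *: hunit H.
Proof.
apply/matrixP => z q; rewrite ord1 !mxE -(sL k q) summxE; apply: eq_bigr => i _.
rewrite summxE; apply: eq_bigr => j _.
rewrite mxE hmul_r_hb mulr_sumr; apply: eq_bigr => p _.
by rewrite hS_hb !mulrA.
Qed.

Lemma antiB_h k : \sum_i \sum_j hc H k i j *: hmul H (hb i) (hS H (hb j)) = he H k *: hunit H.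
Proof.
apply/matrixP => z q; rewrite ord1 !mxE -(sR k q) summxE; apply: eq_bigr => i _.
rewrite summxE; apply: eq_bigr => j _.
rewrite mxE hmul_l_hb mulr_sumr; apply: eq_bigr => p _.
by rewrite hS_hb !mulrA.
Qed.

Lemma CS1 (V : lmodType C) t (X : 'I_n -> 'I_n -> 'I_n -> V) :
  \sum_i \sum_u hc H t i u *: (\sum_p \sum_q hc H u p q *: X i p q) =
  \sum_m \sum_q hc H t m q *: (\sum_i \sum_p hc H m i p *: X i p q).
Proof.
under eq_bigr => i _ do under eq_bigr => u _ do rewrite scaler_sum2.
under [RHS]eq_bigr => m _ do under eq_bigr => q _ do rewrite scaler_sum2.
under eq_bigr => i _ do rewrite exchange_big /=.
under eq_bigr => i _ do under eq_bigr => p _ do rewrite exchange_big /=.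
rewrite [RHS]exchange_big /=.
under [RHS]eq_bigr => q _ do rewrite exchange_big /=.
under [RHS]eq_bigr => q _ do under eq_bigr => i _ do rewrite exchange_big /=.
rewrite [RHS]exchange_big /=.
under [RHS]eq_bigr => i _ do rewrite exchange_big /=.
apply: eq_bigr => i _; apply: eq_bigr => p _; apply: eq_bigr => q _.
rewrite -!scaler_suml; congr (_ *: _).
by rewrite -cA.
Qed.

Lemma comul_coassoc h j p q :
  \sum_i comul H h i j * hc H i p q = \sum_r comul H h p r * hc H r q j.
Proof.
under eq_bigr do rewrite mxE mulr_suml.
under [RHS]eq_bigr do rewrite mxE mulr_suml.
rewrite exchange_big [RHS]exchange_big /=; apply: eq_bigr => k _.
under eq_bigr do rewrite -mulrA.
under [RHS]eq_bigr do rewrite -mulrA.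
by rewrite -!mulr_sumr cA.
Qed.

Lemma CS2 (V : lmodType C) h (Z : 'I_n -> 'I_n -> 'I_n -> V) :
  \sum_i \sum_j comul H h i j *: (\sum_p \sum_q hc H i p q *: Z p q j) =
  \sum_p \sum_r comul H h p r *: (\sum_q \sum_j hc H r q j *: Z p q j).
Proof.
under eq_bigr => i _ do under eq_bigr => u _ do rewrite scaler_sum2.
under [RHS]eq_bigr => m _ do under eq_bigr => q _ do rewrite scaler_sum2.
under eq_bigr => i _ do rewrite exchange_big /=.
under eq_bigr => i _ do under eq_bigr => p _ do rewrite exchange_big /=.
rewrite exchange_big /=.
under eq_bigr => p _ do rewrite exchange_big /=.
under eq_bigr => p _ do under eq_bigr => q _ do rewrite exchange_big /=.
under [RHS]eq_bigr => p _ do rewrite exchange_big /=.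
under [RHS]eq_bigr => p _ do under eq_bigr => q _ do rewrite exchange_big /=.
apply: eq_bigr => p _; apply: eq_bigr => q _; apply: eq_bigr => j _.
rewrite -!scaler_suml; congr (_ *: _).
by rewrite comul_coassoc.
Qed.

Lemma hunitE k : hunit H 0 k = hu H k.
Proof. by rewrite mxE. Qed.

Lemma Dl_unit i : Dl i (hunit H) = hu H i *: hunit H.
Proof.
apply/matrixP => z b; rewrite ord1 DlE mxE hunitE.
by under eq_bigr do rewrite hunitE; rewrite cU.
Qed.

Lemma R_decomp d (rho : 'I_n -> 'M[C]_d) x : R rho x = \sum_k x 0 k *: rho k.
Proof. by []. Qed.

Lemma counit_sum x : \sum_i he H i *: Dl i x = x.
Proof.
apply/matrixP => z j; rewrite ord1 summxE.
under eq_bigr => i _ do rewrite mxE DlE mulr_sumr.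
rewrite exchange_big /=.
under eq_bigr => k _ do [under eq_bigr => i _ do rewrite mulrCA; rewrite -mulr_sumr eL].
by rewrite sum_deltaL.
Qed.

Section Tens.
Variables (p q r t : nat).
Lemma tensmxDl (A1 A2 : 'M[C]_(p, q)) (B : 'M[C]_(r, t)) : (A1 + A2) *t B = A1 *t B + A2 *t B.
Proof. by apply/matrixP => i j; rewrite !mxE mulrDl. Qed.
Lemma tensmxDr (A : 'M[C]_(p, q)) (B1 B2 : 'M[C]_(r, t)) : A *t (B1 + B2) = A *t B1 + A *t B2.
Proof. by apply/matrixP => i j; rewrite !mxE mulrDr. Qed.
Lemma tensmxZl a (A : 'M[C]_(p, q)) (B : 'M[C]_(r, t)) : (a *: A) *t B = a *: (A *t B).
Proof. by apply/matrixP => i j; rewrite !mxE mulrA. Qed.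
Lemma tensmxZr a (A : 'M[C]_(p, q)) (B : 'M[C]_(r, t)) : A *t (a *: B) = a *: (A *t B).
Proof. by apply/matrixP => i j; rewrite !mxE mulrCA. Qed.
Lemma tensmx_suml I (s : seq I) (P : pred I) (F : I -> 'M[C]_(p, q)) (B : 'M[C]_(r, t)) :
  (\sum_(i <- s | P i) F i) *t B = \sum_(i <- s | P i) (F i *t B).
Proof. exact: (big_morph (fun A => A *t B) (fun a b => tensmxDl a b B) (tens0mx B)). Qed.
Lemma tensmx_sumr I (s : seq I) (P : pred I) (A : 'M[C]_(p, q)) (F : I -> 'M[C]_(r, t)) :
  A *t (\sum_(i <- s | P i) F i) = \sum_(i <- s | P i) (A *t F i).
Proof. exact: (big_morph (fun B => A *t B) (tensmxDr A) (tensmx0 A)). Qed.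
End Tens.

Lemma tensmx_scal p q (a b : C) : (a%:M : 'M[C]_p) *t (b%:M : 'M[C]_q) = (a * b)%:M.
Proof.
apply/matrixP => i j.
case: (mxtens_indexP i) => i1 i2; case: (mxtens_indexP j) => j1 j2.
rewrite tensmxE !mxE.
have -> : (mxtens_index (i1, i2) == mxtens_index (j1, j2)) = (i1 == j1) && (i2 == j2).
  apply/eqP/andP => [/(can_inj (@mxtens_indexK _ _)) [-> ->] //|[/eqP -> /eqP ->] //].
by case: (i1 == j1); case: (i2 == j2); rewrite /= ?mulr1n ?mulr0n ?mulr0 ?mul0r.
Qed.

Lemma scal_sumg m I (r : seq I) (P : pred I) (F : I -> C) :
  (\sum_(i <- r | P i) F i)%:M = \sum_(i <- r | P i) (F i)%:M :> 'M[C]_m.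
Proof. exact: raddf_sum. Qed.

Section Rep.
Variables (d : nat) (rho : 'I_n -> 'M[C]_d).
Hypothesis hR : is_hmod H rho.

Lemma R_unit : R rho (hunit H) = 1%:M.
Proof. by rewrite /R -(proj1 hR); under eq_bigr do rewrite hunitE. Qed.

Lemma R_mul x y : R rho (hmul H x y) = R rho x *m R rho y.
Proof.
rewrite (row_decomp x) (row_decomp y) hmul_bilin R_sum.
under eq_bigr => k _ do rewrite R_sum.
under eq_bigr => k _ do under eq_bigr => l _ do rewrite (RZ rho) hmul_hb.
rewrite !R_sum mulmx_suml; apply: eq_bigr => k _.
rewrite mulmx_sumr; apply: eq_bigr => l _.
rewrite !RZ !R_hb -scalemxAl -scalemxAr scalerA hR.2 /R.
by under eq_bigr do rewrite mxE.
Qed.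

Lemma scal_sum I (r : seq I) (P : pred I) (F : I -> C) :
  (\sum_(i <- r | P i) F i)%:M = \sum_(i <- r | P i) (F i)%:M :> 'M[C]_d.
Proof. exact: raddf_sum. Qed.

Lemma K0 w : K rho w 0.
Proof. by move=> i; rewrite Dl0 R0 mxE mulr0 -scalemx1 scale0r. Qed.

Lemma scalD (a b : C) : a%:M + b%:M = (a + b)%:M :> 'M[C]_d.
Proof. by apply/matrixP => p q; rewrite !mxE mulrnDl. Qed.

Lemma K_lin w a x y : K rho w x -> K rho w y -> K rho w (a *: x + y).
Proof.
move=> hx hy i; rewrite DlD DlZ RD RZ hx hy scale_scalar_mx scalD.
by congr (scalar_mx _); rewrite !mxE; ring.
Qed.

Lemma K_Dl w x i : K rho w x -> K rho w (Dl i x).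
Proof.
move=> hx i'; rewrite coassoc_Dl R_sum.
under eq_bigr => p _ do rewrite RZ hx scale_scalar_mx.
rewrite -scal_sum DlE; congr (scalar_mx _).
rewrite mulr_sumr; apply: eq_bigr => p _; ring.
Qed.

Lemma K_mul w w' x y : K rho w x -> K rho w' y -> K rho (w * w') (hmul H x y).
Proof.
move=> hx hy i; rewrite Dl_mul R_sum.
under eq_bigr => a1 _ do rewrite R_sum.
under eq_bigr => a1 _ do under eq_bigr => a2 _ do
  rewrite RZ R_mul hx hy -scalar_mxM scale_scalar_mx.
under eq_bigr => a1 _ do rewrite -scal_sum.
rewrite -scal_sum hmulE; congr (scalar_mx _).
rewrite mulr_sumr; apply: eq_bigr => a1 _.
rewrite mulr_sumr; apply: eq_bigr => a2 _; ring.
Qed.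

Lemma K_unit : K rho 1 (hunit H).
Proof.
move=> i; rewrite Dl_unit RZ R_unit mul1r hunitE.
by rewrite scalemx1.
Qed.

Lemma K_R w y : K rho w y -> R rho y = (w * \sum_k y 0 k * he H k)%:M.
Proof.
move=> hy; rewrite -{1}(counit_sum y) R_sum.
under eq_bigr => i _ do rewrite RZ hy scale_scalar_mx.
rewrite -scal_sum; congr (scalar_mx _).
rewrite mulr_sumr; apply: eq_bigr => i _; ring.
Qed.

Lemma K_tpow w l y : K rho w y ->
  R (projT2 (tpow H rho l)) y = (w ^+ l * \sum_k y 0 k * he H k)%:M.
Proof.
elim: l y => [|l IH] y hy /=.
  rewrite expr0 mul1r /R /=; under eq_bigr do rewrite scale_scalar_mx.
  by rewrite -scal_sumg.
have -> : R (tens_rep H rho (projT2 (tpow H rho l))) y =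
    \sum_i (rho i *t R (projT2 (tpow H rho l)) (Dl i y)).
  rewrite /R /tens_rep.
  under eq_bigr => k _ do rewrite scaler_sumr.
  rewrite exchange_big /=; apply: eq_bigr => i _.
  rewrite tensmx_sumr; under [RHS]eq_bigr => j _ do rewrite DlE tensmxZr scaler_suml.
  rewrite exchange_big /=; apply: eq_bigr => k _.
  rewrite scaler_sumr; apply: eq_bigr => j _.
  by rewrite scalerA.
rewrite (eq_bigr (fun i => rho i *t ((w ^+ l * y 0 i)%:M : 'M_(projT1 (tpow H rho l))))); last first.
  by move=> i _; rewrite IH ?counit_Dl //; exact: K_Dl.
under eq_bigr => i _ do rewrite mulrC -scale_scalar_mx tensmxZr -tensmxZl.
rewrite -tensmx_suml -[\sum_i _ *: rho i]/(R rho y) (K_R hy) tensmx_scal.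
by congr (scalar_mx _); rewrite exprS; ring.
Qed.

Local Notation A := {ffun 'I_n -> 'M[C]_d}.
Definition amul (F G : A) : A := [ffun q => \sum_i \sum_j hm H i j q *: (F i *m G j)].
Definition aone : A := [ffun q => hu H q *: 1%:M].

Lemma amulDl F1 F2 G : amul (F1 + F2) G = amul F1 G + amul F2 G.
Proof.
apply/ffunP => q; rewrite !ffunE -big_split; apply: eq_bigr => i _.
by rewrite -big_split; apply: eq_bigr => j _; rewrite ffunE mulmxDl scalerDr.
Qed.
Lemma amulDr F G1 G2 : amul F (G1 + G2) = amul F G1 + amul F G2.
Proof.
apply/ffunP => q; rewrite !ffunE -big_split; apply: eq_bigr => i _.
by rewrite -big_split; apply: eq_bigr => j _; rewrite ffunE mulmxDr scalerDr.
Qed.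
Lemma amulZl a F G : amul (a *: F) G = a *: amul F G.
Proof.
apply/ffunP => q; rewrite !ffunE scaler_sumr; apply: eq_bigr => i _.
rewrite scaler_sumr; apply: eq_bigr => j _.
by rewrite ffunE -scalemxAl !scalerA mulrC.
Qed.
Lemma amulZr a F G : amul F (a *: G) = a *: amul F G.
Proof.
apply/ffunP => q; rewrite !ffunE scaler_sumr; apply: eq_bigr => i _.
rewrite scaler_sumr; apply: eq_bigr => j _.
by rewrite ffunE -scalemxAr !scalerA mulrC.
Qed.
Lemma amul0l G : amul 0 G = 0.
Proof. by rewrite -(scale0r (0 : A)) amulZl !scale0r. Qed.
Lemma amul0r F : amul F 0 = 0.
Proof. by rewrite -(scale0r (0 : A)) amulZr !scale0r. Qed.
Lemma amul_suml I (r : seq I) (P : pred I) Fs G :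
  amul (\sum_(i <- r | P i) Fs i) G = \sum_(i <- r | P i) amul (Fs i) G.
Proof. exact: (big_morph (fun x => amul x G) (fun a b => amulDl a b G) (amul0l G)). Qed.
Lemma amul_sumr I (r : seq I) (P : pred I) Gs F :
  amul F (\sum_(i <- r | P i) Gs i) = \sum_(i <- r | P i) amul F (Gs i).
Proof. exact: (big_morph (amul F) (amulDr F) (amul0r F)). Qed.

Lemma amulA F G K : amul (amul F G) K = amul F (amul G K).
Proof.
apply/ffunP => q; rewrite !ffunE.
under eq_bigr => p _ do under eq_bigr => k _ do rewrite ffunE mulmx_suml scaler_sumr.
under eq_bigr => p _ do under eq_bigr => k _ do under eq_bigr => i _ do rewrite mulmx_suml scaler_sumr.
under eq_bigr => p _ do under eq_bigr => k _ do under eq_bigr => i _ do under eq_bigr => j _ do rewrite -scalemxAl scalerA.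
under [RHS]eq_bigr => i _ do under eq_bigr => p _ do rewrite ffunE mulmx_sumr scaler_sumr.
under [RHS]eq_bigr => i _ do under eq_bigr => p _ do under eq_bigr => j _ do rewrite mulmx_sumr scaler_sumr.
under [RHS]eq_bigr => i _ do under eq_bigr => p _ do under eq_bigr => j _ do under eq_bigr => k _ do rewrite -scalemxAr scalerA mulmxA.
under eq_bigr => p _ do rewrite exchange_big /=.
under eq_bigr => p _ do under eq_bigr => i _ do rewrite exchange_big /=.
rewrite exchange_big /=.
under eq_bigr => i _ do rewrite exchange_big /=.
under eq_bigr => i _ do under eq_bigr => j _ do rewrite exchange_big /=.
under [RHS]eq_bigr => i _ do rewrite exchange_big /=.
under [RHS]eq_bigr => i _ do under eq_bigr => j _ do rewrite exchange_big /=.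
apply: eq_bigr => i _; apply: eq_bigr => j _; apply: eq_bigr => k _.
rewrite -!scaler_suml; congr (_ *: _).
under eq_bigr do rewrite mulrC.
by rewrite mA; apply: eq_bigr => p _; rewrite mulrC.
Qed.

Lemma amul1l F : amul aone F = F.
Proof.
apply/ffunP => q; rewrite ffunE exchange_big /=.
under eq_bigr => j _ do under eq_bigr => i _ do rewrite ffunE -scalemxAl mul1mx scalerA.
under eq_bigr => j _ do rewrite -scaler_suml.
under eq_bigr => j _ do under eq_bigr => i _ do rewrite mulrC.
under eq_bigr => j _ do rewrite uL.
rewrite (bigD1 q) //= big1 => [|j jq]; first by rewrite eqxx scale1r addr0.
by rewrite (negbTE jq) scale0r.
Qed.
Lemma amul1r F : amul F aone = F.
Proof.
apply/ffunP => q; rewrite ffunE.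
under eq_bigr => i _ do under eq_bigr => j _ do rewrite ffunE -scalemxAr mulmx1 scalerA.
under eq_bigr => i _ do rewrite -scaler_suml.
under eq_bigr => i _ do under eq_bigr => j _ do rewrite mulrC.
under eq_bigr => i _ do rewrite uR.
rewrite (bigD1 q) //= big1 => [|j jq]; first by rewrite eqxx scale1r addr0.
by rewrite (negbTE jq) scale0r.
Qed.

Definition phi (x : 'rV[C]_n) : A := [ffun i => R rho (Dl i x)].
Definition ee (x : 'rV[C]_n) : A := [ffun i => x 0 i *: (1%:M : 'M[C]_d)].
Definition psi (x : 'rV[C]_n) : A := [ffun i => hu H i *: R rho x].

Lemma phiZ a x : phi (a *: x) = a *: phi x.
Proof. by apply/ffunP => i; rewrite !ffunE DlZ RZ. Qed.
Lemma phiD x y : phi (x + y) = phi x + phi y.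
Proof. by apply/ffunP => i; rewrite !ffunE DlD RD. Qed.
Lemma phi0 : phi 0 = 0.
Proof. by apply/ffunP => i; rewrite !ffunE Dl0 R0. Qed.
Lemma phi_sum I (r : seq I) (P : pred I) F :
  phi (\sum_(i <- r | P i) F i) = \sum_(i <- r | P i) phi (F i).
Proof. exact: (big_morph phi phiD phi0). Qed.
Lemma eeZ a x : ee (a *: x) = a *: ee x.
Proof. by apply/ffunP => i; rewrite !ffunE mxE scalerA. Qed.
Lemma eeD x y : ee (x + y) = ee x + ee y.
Proof. by apply/ffunP => i; rewrite !ffunE mxE scalerDl. Qed.
Lemma ee0 : ee 0 = 0.
Proof. by apply/ffunP => i; rewrite !ffunE mxE scale0r. Qed.
Lemma ee_sum I (r : seq I) (P : pred I) F :
  ee (\sum_(i <- r | P i) F i) = \sum_(i <- r | P i) ee (F i).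
Proof. exact: (big_morph ee eeD ee0). Qed.

Lemma KE w a : K rho w a <-> phi a = w *: ee a.
Proof.
split => [hk|hk i].
  by apply/ffunP => i; rewrite !ffunE hk scalerA scalemx1.
by have := congr1 (fun F : A => F i) hk; rewrite /= !ffunE scalerA scalemx1.
Qed.

Lemma ee_mul x y : ee (hmul H x y) = amul (ee x) (ee y).
Proof.
apply/ffunP => q; rewrite !ffunE.
under eq_bigr => i _ do under eq_bigr => j _ do rewrite !ffunE !scalemx1 -scalar_mxM -scalemx1 scalerA.
under eq_bigr => i _ do rewrite -scaler_suml.
rewrite -scaler_suml hmulE; congr (_ *: _).
apply: eq_bigr => i _; apply: eq_bigr => j _; ring.
Qed.

Lemma ee_unit : ee (hunit H) = aone.
Proof. by apply/ffunP => q; rewrite !ffunE hunitE. Qed.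

Lemma phi_mul x y : phi (hmul H x y) = amul (phi x) (phi y).
Proof.
apply/ffunP => q; rewrite !ffunE Dl_mul R_sum; apply: eq_bigr => i _.
rewrite R_sum; apply: eq_bigr => j _.
by rewrite RZ R_mul !ffunE.
Qed.

Lemma phi_unit : phi (hunit H) = aone.
Proof. by apply/ffunP => q; rewrite !ffunE Dl_unit RZ R_unit. Qed.

Lemma ep_hb p q : amul (ee (hb p)) (psi (hb q)) = [ffun t => (p == t)%:R *: rho q].
Proof.
apply/ffunP => t; rewrite !ffunE.
under eq_bigr => i _ do under eq_bigr => j _ do
  rewrite !ffunE R_hb -scalemxAr -scalemxAl mul1mx !scalerA hbE.
under eq_bigr => i _ do rewrite -scaler_suml.
rewrite -scaler_suml; congr (_ *: _).
transitivity (\sum_i (i == p)%:R * \sum_j hu H j * hm H i j t).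
  apply: eq_bigr => i _; rewrite mulr_sumr; apply: eq_bigr => j _; ring.
under eq_bigr => i _ do rewrite uR.
by rewrite sum_deltaL'.
Qed.

Lemma pe_hb p q : amul (psi (hb q)) (ee (hb p)) = [ffun t => (p == t)%:R *: rho q].
Proof.
apply/ffunP => t; rewrite !ffunE.
under eq_bigr => i _ do under eq_bigr => j _ do
  rewrite !ffunE R_hb -scalemxAr -scalemxAl mulmx1 !scalerA hbE.
under eq_bigr => i _ do rewrite -scaler_suml.
rewrite -scaler_suml; congr (_ *: _).
rewrite exchange_big /=.
transitivity (\sum_j (j == p)%:R * \sum_i hu H i * hm H i j t).
  apply: eq_bigr => j _; rewrite mulr_sumr; apply: eq_bigr => i _; ring.
under eq_bigr => j _ do rewrite uL.
by rewrite sum_deltaL'.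
Qed.

Lemma phi_hb u : phi (hb u) = \sum_p \sum_q hc H u p q *: amul (ee (hb p)) (psi (hb q)).
Proof.
apply/ffunP => t; rewrite ffunE Dl_hb /R sum_ffunE.
under [RHS]eq_bigr => p _ do rewrite sum_ffunE.
under [RHS]eq_bigr => p _ do under eq_bigr => q _ do rewrite ffunE ep_hb ffunE scalerA.
rewrite [RHS](bigD1 t) //= [X in _ + X]big1 => [|p pt]; last first.
  by apply: big1 => q _; rewrite (negbTE pt) mulr0 scale0r.
rewrite addr0; apply: eq_bigr => q _.
by rewrite mxE eqxx mulr1.
Qed.

Lemma sum_deltaV (V : lmodType C) (F : 'I_n -> V) t :
  \sum_q (t == q)%:R *: F q = F t.
Proof.
rewrite (bigD1 t) //= big1 => [|q qt]; first by rewrite eqxx scale1r addr0.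
by rewrite eq_sym (negbTE qt) scale0r.
Qed.

Lemma antiA_ee k : \sum_i \sum_j hc H k i j *: amul (ee (hS H (hb i))) (ee (hb j)) = he H k *: aone.
Proof.
under eq_bigr => i _ do under eq_bigr => j _ do rewrite -ee_mul -eeZ.
under eq_bigr => i _ do rewrite -ee_sum.
by rewrite -ee_sum antiA_h eeZ ee_unit.
Qed.

Lemma antiB_phi k : \sum_i \sum_j hc H k i j *: amul (phi (hb i)) (phi (hS H (hb j))) = he H k *: aone.
Proof.
under eq_bigr => i _ do under eq_bigr => j _ do rewrite -phi_mul -phiZ.
under eq_bigr => i _ do rewrite -phi_sum.
by rewrite -phi_sum antiB_h phiZ phi_unit.
Qed.

Lemma L0 t : \sum_i \sum_u hc H t i u *: amul (ee (hS H (hb i))) (phi (hb u)) = psi (hb t).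
Proof.
under eq_bigr => i _ do under eq_bigr => u _ do rewrite phi_hb amul_sumr.
under eq_bigr => i _ do under eq_bigr => u _ do under eq_bigr => p _ do rewrite amul_sumr.
under eq_bigr => i _ do under eq_bigr => u _ do under eq_bigr => p _ do under eq_bigr => q _ do rewrite amulZr -amulA.
rewrite (CS1 t (fun i p q => amul (amul (ee (hS H (hb i))) (ee (hb p))) (psi (hb q)))).
under eq_bigr => m _ do under eq_bigr => q _ do under eq_bigr => i _ do under eq_bigr => p _ do rewrite -amulZl.
under eq_bigr => m _ do under eq_bigr => q _ do under eq_bigr => i _ do rewrite -amul_suml.
under eq_bigr => m _ do under eq_bigr => q _ do rewrite -amul_suml antiA_ee amulZl amul1l scalerA.
rewrite exchange_big /=.
under eq_bigr => q _ do rewrite -scaler_suml.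
under eq_bigr => q _ do (under eq_bigr => m _ do rewrite mulrC; rewrite eL).
exact: sum_deltaV.
Qed.

Lemma L1 r : \sum_q \sum_j hc H r q j *: amul (psi (hb q)) (phi (hS H (hb j))) = ee (hS H (hb r)).
Proof.
symmetry.
transitivity (\sum_i \sum_j hc H r i j *: (he H j *: ee (hS H (hb i)))).
  under eq_bigr => i _ do under eq_bigr => j _ do rewrite scalerA.
  under eq_bigr => i _ do rewrite -scaler_suml.
  under eq_bigr => i _ do (under eq_bigr => j _ do rewrite mulrC; rewrite eR).
  by rewrite sum_deltaV.
under eq_bigr => i _ do under eq_bigr => j _ do
  rewrite -[ee _]amul1r -amulZr -antiB_phi amul_sumr.
under eq_bigr => i _ do under eq_bigr => j _ do under eq_bigr => u _ do rewrite amul_sumr.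
under eq_bigr => i _ do under eq_bigr => j _ do under eq_bigr => u _ do under eq_bigr => v _ do rewrite amulZr.
rewrite (CS1 r (fun i u v => amul (ee (hS H (hb i))) (amul (phi (hb u)) (phi (hS H (hb v)))))).
apply: eq_bigr => t _; apply: eq_bigr => v _; congr (_ *: _).
under eq_bigr => i _ do under eq_bigr => u _ do rewrite -amulA -amulZl.
under eq_bigr => i _ do rewrite -amul_suml.
by rewrite -amul_suml L0.
Qed.

Lemma comm_ep a q : amul (psi (hb q)) (ee a) = amul (ee a) (psi (hb q)).
Proof.
rewrite (row_decomp a) ee_sum amul_sumr amul_suml; apply: eq_bigr => k _.
by rewrite eeZ amulZr amulZl ep_hb pe_hb.
Qed.

Lemma adj_term a i j : amul (amul (phi (hb i)) (ee a)) (phi (hS H (hb j))) =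
  \sum_p \sum_q hc H i p q *: amul (amul (ee (hb p)) (ee a)) (amul (psi (hb q)) (phi (hS H (hb j)))).
Proof.
rewrite phi_hb !amul_suml; apply: eq_bigr => p _; rewrite !amul_suml; apply: eq_bigr => q _.
rewrite !amulZl; congr (_ *: _).
rewrite (amulA (ee (hb p)) (psi (hb q)) (ee a)) comm_ep.
by rewrite -(amulA (ee (hb p)) (ee a) (psi (hb q))) (amulA (amul (ee (hb p)) (ee a)) (psi (hb q))).
Qed.

Lemma K_adj w h a : K rho w a -> K rho w (hadj H h a).
Proof.
move/KE => ha; apply/KE.
transitivity (w *: \sum_i \sum_j comul H h i j *: amul (amul (phi (hb i)) (ee a)) (phi (hS H (hb j)))).
  rewrite /hadj phi_sum scaler_sumr; apply: eq_bigr => i _.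
  rewrite phi_sum scaler_sumr; apply: eq_bigr => j _.
  by rewrite phiZ !phi_mul ha amulZr amulZl !scalerA mulrC.
congr (_ *: _).
under eq_bigr => i _ do under eq_bigr => j _ do rewrite adj_term.
rewrite (CS2 h (fun p q j => amul (amul (ee (hb p)) (ee a)) (amul (psi (hb q)) (phi (hS H (hb j)))))).
rewrite /hadj ee_sum; apply: eq_bigr => p _; rewrite ee_sum; apply: eq_bigr => r _.
rewrite eeZ !ee_mul; congr (_ *: _).
under eq_bigr => q _ do under eq_bigr => j _ do rewrite -amulZr.
under eq_bigr => q _ do rewrite -amul_sumr.
by rewrite -amul_sumr L1.
Qed.

Lemma K_sum_w (sl : seq (C * 'rV[C]_n)) : (0 < d)%N ->
  (forall p, p \in sl -> K rho p.1 p.2) -> \sum_(p <- sl) p.2 = 0 ->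
  \sum_(p <- sl) p.1 *: p.2 = 0.
Proof.
move=> hd hK hs; apply/matrixP => z i; rewrite ord1 summxE mxE.
have : R rho (Dl i (\sum_(p <- sl) p.2)) = (\sum_(p <- sl) p.1 * p.2 0 i)%:M.
  rewrite Dl_sum R_sum scal_sum; apply: eq_big_seq => p ps.
  by rewrite hK.
rewrite hs Dl0 R0 => /matrixP/(_ (Ordinal hd) (Ordinal hd)).
rewrite !mxE eqxx mulr1n => e; rewrite [RHS]e; apply: eq_bigr => p _.
by rewrite mxE.
Qed.

Lemma K_direct : (0 < d)%N -> forall sl : seq (C * 'rV[C]_n), uniq (map fst sl) ->
    (forall p, p \in sl -> K rho p.1 p.2) ->
    \sum_(p <- sl) p.2 = 0 -> forall p, p \in sl -> p.2 = 0.
Proof.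
move=> hd sl; move: {2}(size sl) (erefl (size sl)) => m; elim: m sl => [|m IH] [|[w0 x0] sl] //= [hsz] /andP[w0n hu] hK hs.
have hK' : forall p, p \in sl -> K rho p.1 p.2.
  by move=> p ps; apply: hK; rewrite inE ps orbT.
have hw := K_sum_w hd hK hs.
move: hs hw; rewrite !big_cons /= => hs hw.
set s' := map (fun p => (p.1, (p.1 - w0) *: p.2)) sl.
have hz : forall p, p \in sl -> p.2 = 0.
  have hs' : \sum_(p <- s') p.2 = 0.
    rewrite /s' big_map /=.
    under eq_bigr do rewrite scalerBl.
    rewrite sumrB -scaler_sumr.
    have -> : \sum_(p <- sl) p.1 *: p.2 = - (w0 *: x0) by apply/eqP; rewrite -addr_eq0 addrC hw.
    have -> : \sum_(p <- sl) p.2 = - x0 by apply/eqP; rewrite -addr_eq0 addrC hs.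
    by rewrite scalerN subrr.
  have hu' : uniq (map fst s') by rewrite /s' -map_comp.
  have hK'' : forall p, p \in s' -> K rho p.1 p.2.
    move=> p /mapP[q qs ->] /=; rewrite -[_ *: _]addr0; apply: K_lin; first exact: hK'.
    exact: K0.
  move=> p ps; have := IH s' _ hu' hK'' hs' (p.1, (p.1 - w0) *: p.2).
  rewrite size_map hsz => /(_ erefl).
  rewrite /s' map_f // => /(_ isT) /= /eqP; rewrite scaler_eq0 subr_eq0 => /orP[/eqP e|/eqP //].
  by move: w0n; rewrite -e map_f.
have hx0 : x0 = 0.
  by move: hs; rewrite big1_seq ?addr0 // => p /andP[_ ps]; exact: hz.
move=> p; rewrite inE => /orP[/eqP -> //|]; exact: hz.
Qed.

Lemma in_HtensL_Dl (L : 'rV[C]_n -> Prop) x : (forall i, L (Dl i x)) -> in_HtensL L (comul H x).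
Proof.
move=> hL; exists [seq (hb i, Dl i x) | i <- index_enum 'I_n]; split.
  by move=> p /mapP[i _ ->] /=.
rewrite big_map; apply/matrixP => a b; rewrite summxE (bigD1 a) //= big1 => [|i ia].
  by rewrite !mxE big_ord1 !mxE eqxx mul1r addr0.
by rewrite !mxE big_ord1 !mxE (eq_sym a i) (negbTE ia) andbF mul0r.
Qed.

Lemma coideal_LKer w : is_left_coideal H (LKer H rho w).
Proof.
split; first split.
- by apply/LKerK; exact: K0.
- by move=> a x y /LKerK hx /LKerK hy; apply/LKerK; exact: K_lin.
by move=> x /LKerK hx; apply: in_HtensL_Dl => i; apply/LKerK; exact: K_Dl.
Qed.

Lemma hadjD h a1 a2 : hadj H h (a1 + a2) = hadj H h a1 + hadj H h a2.
Proof.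
rewrite /hadj -big_split; apply: eq_bigr => i _; rewrite -big_split; apply: eq_bigr => j _.
by rewrite hmulDr hmulDl scalerDr.
Qed.
Lemma hadj0 h : hadj H h 0 = 0.
Proof. by rewrite /hadj big1 // => i _; rewrite big1 // => j _; rewrite hmul0r hmul0l scaler0. Qed.
Lemma hadj_sum h I (r : seq I) (P : pred I) F :
  hadj H h (\sum_(i <- r | P i) F i) = \sum_(i <- r | P i) hadj H h (F i).
Proof. exact: (big_morph (hadj H h) (hadjD h) (hadj0 h)). Qed.

Lemma Ks_sub : is_subspace (LKer_sum H rho).
Proof.
split; first by exists [::]; split => //; rewrite big_nil.
move=> a x y [sx [hx ->]] [sy [hy ->]].
exists (map (fun p => (p.1, a *: p.2)) sx ++ sy); split.
  move=> p; rewrite mem_cat => /orP[/mapP[q qs ->]|ps] /=; last exact: hy.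
  have [n1 /LKerK k1] := hx q qs; split => //; apply/LKerK.
  rewrite -[_ *: _]addr0; apply: K_lin => //; exact: K0.
by rewrite big_cat big_map scaler_sumr.
Qed.

Lemma Ks_Dl x i : LKer_sum H rho x -> LKer_sum H rho (Dl i x).
Proof.
move=> [sx [hx ->]]; exists (map (fun p => (p.1, Dl i p.2)) sx); split.
  move=> p /mapP[q qs ->] /=; have [n1 /LKerK k1] := hx q qs; split => //.
  by apply/LKerK; exact: K_Dl.
by rewrite big_map Dl_sum.
Qed.

Lemma main_sec :
  (forall w : C, `|w| = 1 ->
     (exists h, h != 0 /\ LKer H rho w h) ->
     is_left_coideal H (LKer H rho w) /\ ad_stable H (LKer H rho w)) /\
  (forall w w' : C, `|w| = 1 -> `|w'| = 1 ->
     forall x y, LKer H rho w x -> LKer H rho w' y ->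
       LKer H rho (w * w') (hmul H x y)) /\
  (forall (w : C) (l : nat), `|w| = 1 -> w ^+ l = 1 ->
     forall h, LKer H rho w h -> LKer H (projT2 (tpow H rho l)) 1 h) /\
  ((0 < d)%N -> LKer_direct H rho) /\
  is_left_coideal H (LKer_sum H rho) /\
  is_subalgebra H (LKer_sum H rho) /\
  ad_stable H (LKer_sum H rho).
Proof.
split.
  move=> w _ _; split; first exact: coideal_LKer.
  by move=> h a /LKerK ha; apply/LKerK; exact: K_adj.
split.
  by move=> w w' _ _ x y /LKerK hx /LKerK hy; apply/LKerK; exact: K_mul.
split.
  move=> w l _ hw h /LKerK hh; apply/LKerK => i.
  by rewrite (K_tpow l (K_Dl i hh)) hw counit_Dl.
split.
  move=> hd sl hu hK hs p ps; apply: (K_direct hd hu _ hs ps).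
  by move=> q qs; have [_ /LKerK] := hK q qs.
split.
  split; first exact: Ks_sub.
  by move=> x hx; apply: in_HtensL_Dl => i; exact: Ks_Dl.
split.
  split; first exact: Ks_sub.
  split.
    exists [:: (1, hunit H)]; split; last by rewrite big_seq1.
    move=> p; rewrite inE => /eqP -> /=; split; first exact: normr1.
    by apply/LKerK; exact: K_unit.
  move=> x y [sx [hx ->]] [sy [hy ->]].
  exists (map (fun pq => (pq.1.1 * pq.2.1, hmul H pq.1.2 pq.2.2)) [seq (p, q) | p <- sx, q <- sy]).
  split.
    move=> r /mapP[[p q] /allpairsP[[p' q'] [/= p's q's [-> ->]]] ->] /=.
    have [n1 /LKerK k1] := hx _ p's; have [n2 /LKerK k2] := hy _ q's.
    split; first by rewrite normrM n1 n2 mulr1.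
    by apply/LKerK; exact: K_mul.
  rewrite big_map big_allpairs hmul_suml; apply: eq_bigr => p _.
  by rewrite hmul_sumr.
move=> h a [sa [ha ->]]; exists (map (fun p => (p.1, hadj H h p.2)) sa); split.
  move=> p /mapP[q qs ->] /=; have [n1 /LKerK k1] := ha q qs; split => //.
  by apply/LKerK; exact: K_adj.
by rewrite big_map hadj_sum.
Qed.

End Rep.

End Main.

Theorem lemma3p1 (C : numClosedFieldType) (n : nat) (H : hopf_data C n)
  (d : nat) (rho : 'I_n -> 'M[C]_d) :
  is_hopf H -> is_hmod H rho ->
  (* (i) *)
  (forall w : C, `|w| = 1 ->
     (exists h, h != 0 /\ LKer H rho w h) ->
     is_left_coideal H (LKer H rho w) /\ ad_stable H (LKer H rho w)) /\
  (* (ii) *)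
  (forall w w' : C, `|w| = 1 -> `|w'| = 1 ->
     forall x y, LKer H rho w x -> LKer H rho w' y ->
       LKer H rho (w * w') (hmul H x y)) /\
  (* (iii) *)
  (forall (w : C) (l : nat), `|w| = 1 -> w ^+ l = 1 ->
     forall h, LKer H rho w h -> LKer H (projT2 (tpow H rho l)) 1 h) /\
  (* (iv) *)
  ((0 < d)%N -> LKer_direct H rho) /\
  is_left_coideal H (LKer_sum H rho) /\
  is_subalgebra H (LKer_sum H rho) /\
  ad_stable H (LKer_sum H rho).
Proof. by move=> hH hR; exact: (main_sec hH hR). Qed.
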